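(* If $J,K$ are two independent randomly-stopped bit sequences, then their concatenation $J\Vert K$ is a randomly-stopped bit sequence.
   Context: $\{0,1\}^*:=\bigcup_{n\ge0}\{0,1\}^n$; for $K\in\{0,1\}^*$, $|K|$ is its length, $K_i$ its $i$-th entry, and $K^{j}=(K_1,\dots,K_j)$; $J\Vert K$ denotes concatenation of sequences. A random $K\in\{0,1\}^*$ is a randomly-stopped bit sequence if $\mathbb{P}(K_n=k_n\mid |K|\ge n,\,K^{n-1}=k^{n-1})=1/2$ for all $n\ge1$ and all $k^n\in\{0,1\}^n$ with $\mathbb{P}(|K|\ge n,\,K^{n-1}=k^{n-1})>0$. *)

(* Defs.v *)
From HB Require Import structures.
From mathcomp Require Import all_boot all_order all_algebra.
From mathcomp Require Import all_classical all_reals.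
From mathcomp Require Import ereal measure probability.
Set Implicit Arguments. Unset Strict Implicit. Unset Printing Implicit Defensive.
Import Order.TTheory GRing.Theory Num.Theory.
Local Open Scope classical_set_scope.
Local Open Scope ring_scope.

(* Elements of {0,1}^* are bit sequences [seq bool]; the i-th entry K_i
   (1-indexed) is [nth false K i.-1], and K^j is [take j K]. *)

(* A random element of {0,1}^* on (T, P): every fibre {K = s} is an event
   (equivalent to measurability for the discrete sigma-algebra on the
   countable set of bit sequences). *)
Definition discrete_rv d (T : measurableType d) (K : T -> seq bool) : Prop :=
  forall s : seq bool, measurable (K @^-1` [set s]).

Definition independent_rv d (T : measurableType d) (R : realType)
  (P : probability T R) (J K : T -> seq bool) : Prop :=
  forall s t : seq bool,
    P (J @^-1` [set s] `&` K @^-1` [set t]) =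
    (P (J @^-1` [set s]) * P (K @^-1` [set t]))%E.

(* Randomly-stopped bit sequence: for all n >= 1 and k^n in {0,1}^n with
   P(|K| >= n, K^{n-1} = k^{n-1}) > 0,
   P(K_n = k_n | |K| >= n, K^{n-1} = k^{n-1}) = 1/2,
   the conditional probability written out as P(A /\ B) = 1/2 * P(A). *)
Definition randomly_stopped d (T : measurableType d) (R : realType)
  (P : probability T R) (K : T -> seq bool) : Prop :=
  discrete_rv K /\
  forall (n : nat) (k : seq bool), (1 <= n)%N -> size k = n ->
    let A := [set w | (n <= size (K w))%N /\ take n.-1 (K w) = take n.-1 k] in
    (0 < P A)%E ->
    P (A `&` [set w | nth false (K w) n.-1 = nth false k n.-1]) =
    ((2%:R^-1)%:E * P A)%E.

(* Main.v *)
Require Import Defs.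
From HB Require Import structures.
From mathcomp Require Import all_boot all_order all_algebra.
From mathcomp Require Import all_classical all_reals.
From mathcomp Require Import ereal measure probability sequences.
Set Implicit Arguments. Unset Strict Implicit. Unset Printing Implicit Defensive.
Import Order.TTheory GRing.Theory Num.Theory.
Local Open Scope classical_set_scope.
Local Open Scope ring_scope.

Lemma pair_meas d (T : measurableType d) (J K : T -> seq bool) 
  (S : seq bool * seq bool -> Prop) :
  discrete_rv J -> discrete_rv K -> measurable [set w | S (J w, K w)].
Proof.
move=> mJ mK.
have -> : [set w | S (J w, K w)] = \bigcup_i
   [set w | exists p, pickle_inv i = Some p /\ S p /\ (J w, K w) = p].
  apply/seteqP; split => w /=.
    move=> Sw; exists (pickle (J w, K w)) => //=.
    by exists (J w, K w); rewrite pickleK_inv.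
  by move=> [i _ [p [_ [Sp ->]]]].
apply: bigcupT_measurable => i.
case E: (pickle_inv i) => [[s t]|]; last first.
  have -> : [set w | exists p, None = Some p /\ S p /\ (J w, K w) = p] = set0 :> set T.
    by apply/seteqP; split => w //= [p [] //].
  exact: measurable0.
have [Sst|nS] := pselect (S (s, t)).
  have -> : [set w | exists p, Some (s, t) = Some p /\ S p /\ (J w, K w) = p] =
     J @^-1` [set s] `&` K @^-1` [set t].
    apply/seteqP; split => w /=.
      by move=> [p [[<-] [_ [-> ->]]]].
    by move=> [-> ->]; exists (s, t).
  exact: measurableI.
have -> : [set w | exists p, Some (s, t) = Some p /\ S p /\ (J w, K w) = p] = set0 :> set T.
  by apply/seteqP; split => w //= [p [[<-] [] //]].
exact: measurable0.
Qed.

Lemma indep_ext (R : realType) d (T : measurableType d) (P : probability T R)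
  (J K : T -> seq bool) (S : seq bool -> Prop) (j : seq bool) :
  discrete_rv J -> discrete_rv K -> independent_rv P J K ->
  P ([set w | J w = j] `&` [set w | S (K w)]) =
  (P [set w | J w = j] * P [set w | S (K w)])%E.
Proof.
move=> mJ mK iJK.
pose F i := [set w | exists t, pickle_inv i = Some t /\ S t /\ K w = t].
have mF i : measurable (F i).
  exact: (pair_meas (fun p => exists t, pickle_inv i = Some t /\ S t /\ p.2 = t) mJ mK).
have tF : trivIset setT F.
  move=> i i' _ _ [w [[t [Ht [_ Kt]]] [t' [Ht' [_ Kt']]]]].
  have := @pickle_invK (seq bool) i; have := @pickle_invK (seq bool) i'; by rewrite Ht Ht' -Kt -Kt' /= => -> ->.
have -> : [set w | S (K w)] = \bigcup_(i in setT) F i.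
  apply/seteqP; split => w /=.
    by move=> Sw; exists (pickle (K w)) => //; exists (K w); rewrite pickleK_inv.
  by move=> [i _ [t [_ [St ->]]]].
have mJj : measurable [set w | J w = j] by exact: (pair_meas (fun p => p.1 = j) mJ mK).
rewrite setI_bigcupr measure_bigcup; last first.
  - exact: trivIset_setIl.
  - by move=> i _; exact: measurableI.
rewrite measure_bigcup //.
rewrite -(fineK (fin_num_measure P _ mJj)) -nneseriesZl; last by move=> i _; exact: measure_ge0.
apply: eq_eseriesr => i _.
case E: (pickle_inv i) => [t|]; last first.
  have -> : F i = set0 by apply/seteqP; split => w //= [t []]; rewrite E.
  by rewrite setI0 measure0 mule0.
have [St|nS] := pselect (S t); last first.
  have -> : F i = set0 by apply/seteqP; split => w //= [t' [] ]; rewrite E => -[<-] [].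
  by rewrite setI0 measure0 mule0.
have -> : F i = K @^-1` [set t].
  apply/seteqP; split => w /=; first by move=> [t' [] ]; rewrite E => -[<-] [_ ->].
  by move=> Kw; exists t.
by rewrite fineK ?(fin_num_measure P _ mJj) //; exact: iJK.
Qed.

From mathcomp Require Import zify.

Lemma seq_a (j t k : seq bool) n : (1 <= n)%N -> (n <= size j)%N ->
  take n.-1 (j ++ t) = take n.-1 j /\ nth false (j ++ t) n.-1 = nth false j n.-1.
Proof.
move=> n1 nj; rewrite take_cat nth_cat.
by have -> : (n.-1 < size j)%N by lia.
Qed.

Lemma seq_b (j t k : seq bool) n : size k = n -> (size j < n)%N ->
  ((n <= size (j ++ t))%N /\ take n.-1 (j ++ t) = take n.-1 k) <->
  (j = take (size j) k /\ ((n - size j <= size t)%N /\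
     take (n - size j).-1 t = take (n - size j).-1 (drop (size j) k))).
Proof.
move=> sk jn.
have sj : size (take (size j) k) = size j by rewrite size_take sk jn.
rewrite size_cat take_cat.
have -> : (n.-1 < size j)%N = false by lia.
rewrite -{1}(cat_take_drop (size j) k) take_cat sj.
have -> : (n.-1 < size j)%N = false by lia.
have -> : (n.-1 - size j = (n - size j).-1)%N by lia.
split.
  move=> [h1 /eqP]; rewrite eqseq_cat; last by rewrite sj.
  move=> /andP[/eqP e1 /eqP e2]; split; first exact: e1.
  split; [lia | exact: e2].
move=> [h1 [h2 h3]]; split; first lia.
by rewrite {1}h1 h3.
Qed.

Lemma seq_c (j t k : seq bool) n m : size k = n -> size j = m -> (m < n)%N ->
  nth false (j ++ t) n.-1 = nth false t (n - m).-1 /\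
  nth false k n.-1 = nth false (drop m k) (n - m).-1.
Proof.
move=> sk sjm mn; rewrite nth_cat nth_drop sjm.
have -> : (n.-1 < m)%N = false by lia.
have -> : (m + (n - m).-1 = n.-1)%N by lia.
by have -> : (n.-1 - m = (n - m).-1)%N by lia.
Qed.

Lemma rs_uncond (R : realType) d (T : measurableType d) (P : probability T R)
  (K : T -> seq bool) : randomly_stopped P K ->
  forall (n : nat) (k : seq bool), (1 <= n)%N -> size k = n ->
  P ([set w | (n <= size (K w))%N /\ take n.-1 (K w) = take n.-1 k]
     `&` [set w | nth false (K w) n.-1 = nth false k n.-1]) =
  ((2%:R^-1)%:E * P [set w | (n <= size (K w))%N /\ take n.-1 (K w) = take n.-1 k])%E.
Proof.
move=> [mK H] n k n1 sk.
have [pos|] := boolP (0 < P [set w | (n <= size (K w))%N /\ take n.-1 (K w) = take n.-1 k])%E.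
  exact: (H n k n1 sk pos).
set A := [set w | _ /\ _].
have mA : measurable A.
  exact: (pair_meas (fun p => (n <= size p.1)%N /\ take n.-1 p.1 = take n.-1 k) mK mK).
rewrite lt0e negb_and negbK measure_ge0 orbF => /eqP A0.
rewrite A0 mule0; apply/eqP; rewrite eq_le measure_ge0 andbT -A0.
have mB : measurable [set w | nth false (K w) n.-1 = nth false k n.-1].
  exact: (pair_meas (fun p => nth false p.1 n.-1 = nth false k n.-1) mK mK).
apply: le_measure; rewrite ?inE; [exact: measurableI | exact: mA | by move=> w []].
Qed.

Theorem proposition2 (R : realType) (d : measure_display) (T : measurableType d)
  (P : probability T R) (J K : T -> seq bool) :
  randomly_stopped P J -> randomly_stopped P K -> independent_rv P J K ->
  randomly_stopped P (fun w => J w ++ K w).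
Proof.
move=> rsJ rsK iJK.
have [mJ _] := rsJ; have [mK _] := rsK.
split.
  by move=> s; exact: (pair_meas (fun p => p.1 ++ p.2 = s) mJ mK).
move=> n k n1 sk A _; subst A.
set AL := [set w | _ /\ _].
set BL := [set w | nth _ _ _ = _].
pose AJ := [set w | (n <= size (J w))%N /\ take n.-1 (J w) = take n.-1 k].
pose BJ := [set w | nth false (J w) n.-1 = nth false k n.-1].
pose SA m (t : seq bool) := (n - m <= size t)%N /\ take (n - m).-1 t = take (n - m).-1 (drop m k).
pose SB m (t : seq bool) := nth false t (n - m).-1 = nth false (drop m k) (n - m).-1.
pose FA i := match i with 0 => AJ | m.+1 =>
  if (m < n)%N then [set w | J w = take m k] `&` [set w | SA m (K w)] else set0 end.
have mFA i : measurable (FA i).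
  case: i => [|m] /=.
    exact: (pair_meas (fun p => (n <= size p.1)%N /\ take n.-1 p.1 = take n.-1 k) mJ mK).
  case: ifP => _; last exact: measurable0.
  apply: measurableI.
    exact: (pair_meas (fun p => p.1 = take m k) mJ mK).
  exact: (pair_meas (fun p => SA m p.2) mJ mK).
have mBL : measurable BL.
  exact: (pair_meas (fun p => nth false (p.1 ++ p.2) n.-1 = nth false k n.-1) mJ mK).
have FAsize i w : FA i w -> i = (if (n <= size (J w))%N then 0 else (size (J w)).+1).
  case: i => [|m] /=.
    by move=> [h _]; rewrite h.
  case: ifP => // mn [/= -> _].
  by rewrite size_take sk mn leqNgt mn.
have tFA : trivIset setT FA.
  by move=> i i' _ _ [w [h1 h2]]; rewrite (FAsize _ _ h1) (FAsize _ _ h2).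
have ALE : AL = \bigcup_(i in setT) FA i.
  apply/seteqP; split => w.
    move=> ALw; case: (leqP n (size (J w))) => h.
      have [e1 _] := @seq_a (J w) (K w) k n n1 h.
      exists 0 => //=; split => //; rewrite -e1; by case: ALw.
    exists (size (J w)).+1 => //=; rewrite h.
    by have [e1 [e2 e3]] := (@seq_b (J w) (K w) k n sk h).1 ALw.
  move=> [[|m] _ /=].
    move=> [h1 h2]; have [e1 _] := @seq_a (J w) (K w) k n n1 h1.
    by split; [rewrite size_cat; lia | rewrite e1].
  case: ifP => // mn [Jw [a1 a2]].
  have sJ : size (J w) = m by rewrite Jw size_take sk mn.
  apply: (proj2 (@seq_b (J w) (K w) k n sk _)); first by rewrite sJ.
  by rewrite sJ.
have BLE i : P (FA i `&` BL) = ((2%:R^-1)%:E * P (FA i))%E.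
  case: i => [|m] /=.
    have -> : AJ `&` BL = AJ `&` BJ.
      apply/seteqP; split => w [[h1 h2] h3]; have [_ e2] := @seq_a (J w) (K w) k n n1 h1.
        by split => //; move: h3; rewrite /BL /BJ /= e2.
      by split => //; move: h3; rewrite /BL /BJ /= e2.
    exact: (rs_uncond rsJ n1 sk).
  case: ifP => mn; last by rewrite set0I measure0 mule0.
  have -> : [set w | J w = take m k] `&` [set w | SA m (K w)] `&` BL =
            [set w | J w = take m k] `&` [set w | SA m (K w) /\ SB m (K w)].
    apply/seteqP; split => w /=.
      move=> [[Jw a] b]; split => //; split => //.
      have sJ : size (J w) = m by rewrite Jw size_take sk mn.
      have [c1 c2] := @seq_c (J w) (K w) k n m sk sJ mn.
      by rewrite /SB -c1 -c2.
    move=> [Jw [a b]]; split => //.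
    have sJ : size (J w) = m by rewrite Jw size_take sk mn.
    have [c1 c2] := @seq_c (J w) (K w) k n m sk sJ mn.
    by rewrite /BL /= c1 c2.
  rewrite (@indep_ext R d T P J K (fun t => SA m t /\ SB m t) (take m k) mJ mK iJK).
  rewrite (@indep_ext R d T P J K (SA m) (take m k) mJ mK iJK).
  have n1' : (1 <= n - m)%N by lia.
  have sk' : size (drop m k) = (n - m)%N by rewrite size_drop sk.
  have eK : P [set w | SA m (K w) /\ SB m (K w)] =
            ((2%:R^-1)%:E * P [set w | SA m (K w)])%E.
    exact: (rs_uncond rsK n1' sk').
  by rewrite eK muleCA.
rewrite ALE setI_bigcupl measure_bigcup; last first.
  - exact: trivIset_setIr.
  - by move=> i _; exact: measurableI.
rewrite measure_bigcup // -nneseriesZl; last by move=> i _; exact: measure_ge0.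
by apply: eq_eseriesr => i _; exact: BLE.
Qed.
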